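(* For every $\mathsf{T_{z}S}$-closed semigroup $X$, its center $Z(X)$ is chain-finite.
   Context: $\mathsf{T_{z}S}$ is the class of Hausdorff zero-dimensional topological semigroups. A semigroup $X$ is $\mathsf{T_{z}S}$-closed if for every isomorphic topological embedding of $X$ (discrete topology) into some $Y\in\mathsf{T_{z}S}$ the image is closed in $Y$. $Z(X)=\{z\in X:\forall x\in X\ (xz=zx)\}$. A subset $C$ is a chain if $xy\in\{x,y\}$ for $x,y\in C$; a semigroup is chain-finite if it contains no infinite chain. *)

(* Defs.v *)
From HB Require Import structures.
From mathcomp Require Import all_boot all_order.
From mathcomp Require Import all_classical all_reals all_analysis.
Set Implicit Arguments. Unset Strict Implicit. Unset Printing Implicit Defensive.
Local Open Scope classical_set_scope.

Definition semigroup_op (X : Type) (mul : X -> X -> X) :=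
  forall x y z, mul x (mul y z) = mul (mul x y) z.

Definition zero_dim_space (Y : topologicalType) :=
  forall (y : Y) (U : set Y), open U -> U y ->
    exists V : set Y, [/\ clopen V, V y & V `<=` U].

Definition TzS_semigroup (Y : topologicalType) (mulY : Y -> Y -> Y) :=
  [/\ semigroup_op mulY,
      continuous (fun p : Y * Y => mulY p.1 p.2),
      hausdorff_space Y
    & zero_dim_space Y].

(* h is an isomorphic topological embedding of the semigroup X, carrying
   the discrete topology, into Y: an injective homomorphism which is a
   homeomorphism onto its image, i.e. whose image is a discrete subspace. *)
Definition discrete_iso_embedding (X : Type) (mulX : X -> X -> X)
  (Y : topologicalType) (mulY : Y -> Y -> Y) (h : X -> Y) :=
  [/\ injective h,
      forall x x', h (mulX x x') = mulY (h x) (h x')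
    & forall x, exists U : set Y, [/\ open U, U (h x) &
        forall x', U (h x') -> x' = x]].

Definition TzS_closed (X : Type) (mulX : X -> X -> X) :=
  forall (Y : topologicalType) (mulY : Y -> Y -> Y) (h : X -> Y),
    TzS_semigroup mulY -> discrete_iso_embedding mulX mulY h ->
    closed (range h).

Definition sg_center (X : Type) (mulX : X -> X -> X) : set X :=
  [set z | forall x, mulX x z = mulX z x].

Definition is_chain (X : Type) (mulX : X -> X -> X) (C : set X) :=
  forall x y, C x -> C y -> mulX x y = x \/ mulX x y = y.

Definition chain_finite (X : Type) (mulX : X -> X -> X) (A : set X) :=
  forall C : set X, C `<=` A -> is_chain mulX C -> finite_set C.

(* Main.v *)
Require Import Defs.
From HB Require Import structures.
From mathcomp Require Import all_boot all_order.
From mathcomp Require Import all_classical all_reals all_analysis.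
Set Implicit Arguments. Unset Strict Implicit. Unset Printing Implicit Defensive.
Local Open Scope classical_set_scope.

Record setup := Setup {
  sX : Type;
  smul : sX -> sX -> sX;
  sassoc : semigroup_op smul;
  se : nat -> sX;
  se_central : forall n x, smul x (se n) = smul (se n) x;
  se_chain : forall n m, smul (se n) (se m) = se n \/ smul (se n) (se m) = se m;
  se_inj : injective se;
  sP : set_system nat;
  sPT : sP setT;
  sPI : forall A B, sP A -> sP B -> sP (A `&` B);
  sPS : forall A B, A `<=` B -> sP A -> sP B;
  sP0 : ~ sP set0;
  sPU : forall A, sP A \/ sP (~` A);
  sPfree : forall n, ~ sP [set n]
}.

Section A.
Variable S : setup.
Local Notation X := (sX S).
Local Notation P := (sP S).

Definition mul1 (a b : option X) : option X :=
  match a, b with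
  | None, _ => b
  | Some x, None => Some x
  | Some x, Some y => Some (smul x y)
  end.
Local Notation "a ** b" := (mul1 a b) (at level 40, left associativity).
Definition E k : option X := Some (se S k).
Arguments E : simpl never.

Lemma mul1A a b c : a ** (b ** c) = a ** b ** c.
Proof. by case: a => [x|] //; case: b => [y|] //; case: c => [z|] //=; rewrite sassoc. Qed.
Lemma mul1a0 a : a ** None = a. Proof. by case: a. Qed.
Lemma EC a k : a ** E k = E k ** a.
Proof. by case: a => [x|] //=; rewrite se_central. Qed.
Lemma EE k : E k ** E k = E k.
Proof. by rewrite /E /=; case: (se_chain S k k) => ->. Qed.
Lemma Echain m n : E m ** E n = E m \/ E m ** E n = E n.
Proof. by rewrite /E /=; case: (se_chain S m n) => ->; [left|right]. Qed.
Lemma pushE a b k : a ** E k ** b = a ** b ** E k.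
Proof. by rewrite -mul1A -(EC b) mul1A. Qed.
Lemma mulE_Some a k : exists x, a ** E k = Some x.
Proof. by case: a => [x|]; eexists. Qed.

Definition T := (option X * bool)%type.
Definition valf (u : T) k := if u.2 then u.1 ** E k else u.1.
Definition mulT (u v : T) : T := (u.1 ** v.1, u.2 || v.2).

Lemma valf_mul u v k : valf (mulT u v) k = valf u k ** valf v k.
Proof.
case: u => a [] ; case: v => b [] //=; rewrite /valf /=.
- by rewrite pushE mul1A -[X in _ = X]mul1A EE.
- by rewrite pushE.
- by rewrite mul1A.
Qed.

Definition eqv (u v : T) := P [set k | valf u k = valf v k].

Lemma eqv_refl u : eqv u u.
Proof. by apply: sPS (sPT S). Qed.
Lemma eqv_sym u v : eqv u v -> eqv v u.
Proof. by apply: sPS => k /= ->. Qed.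
Lemma eqv_trans u v w : eqv u v -> eqv v w -> eqv u w.
Proof. by move=> h1 h2; apply: sPS (sPI h1 h2) => k [/= -> ->]. Qed.
Lemma eqv_mul u u' v v' : eqv u u' -> eqv v v' -> eqv (mulT u v) (mulT u' v').
Proof. by move=> h1 h2; apply: sPS (sPI h1 h2) => k [/= h3 h4]; rewrite !valf_mul h3 h4. Qed.

Definition Y := {R : set T | exists u, R = eqv u}.
Definition q (u : T) : Y := exist _ (eqv u) (ex_intro _ u erefl).
Definition rep (y : Y) : T := projT1 (cid (proj2_sig y)).

Lemma q_rep y : q (rep y) = y.
Proof.
rewrite /rep; case: (cid _) => u hu /=; case: y hu => R hR /= hu.
by apply: eq_exist; rewrite hu.
Qed.

Lemma q_eq u v : (q u = q v) <-> eqv u v.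
Proof.
split.
  move=> /(congr1 (@proj1_sig _ _)) /= h.
  by have := eqv_refl v; rewrite -h.
move=> h; apply: eq_exist => /=; apply/funext => w; apply/propext; split => h'.
  exact: eqv_trans (eqv_sym h) h'.
exact: eqv_trans h h'.
Qed.

Lemma q_surj y : exists u, y = q u.
Proof. by exists (rep y); rewrite q_rep. Qed.

Definition mulY (y z : Y) : Y := q (mulT (rep y) (rep z)).

Lemma mulYq u v : mulY (q u) (q v) = q (mulT u v).
Proof.
apply/q_eq; apply: eqv_mul; apply/q_eq; exact: q_rep.
Qed.

Lemma mulY_assoc : semigroup_op mulY.
Proof.
move=> x y z; have [u ->] := q_surj x; have [v ->] := q_surj y; have [w ->] := q_surj z.
rewrite !mulYq; congr q; rewrite /mulT /= mul1A; congr pair.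
by rewrite orbA.
Qed.


Definition isX (y : Y) := exists x : option X, y = q (x, false).
Definition alpha (y : Y) := (rep y).1.

Lemma hat_rep y : ~ isX y -> y = q (alpha y, true).
Proof.
move=> hy; rewrite /alpha; move: (q_rep y); case: (rep y) => a [] //= h.
by exfalso; apply: hy; exists a.
Qed.

Lemma qX_inj x x' : q (x, false) = q (x', false) -> x = x'.
Proof.
move/q_eq => h; case: (pselect (x = x')) => // ne; case: (@sP0 S).
by apply: sPS h => k /=.
Qed.

Lemma Pex A : P A -> exists m, A m.
Proof.
move=> h; case: (pselect (exists m, A m)) => // ne; case: (@sP0 S).
by apply: sPS h => k Ak; apply: ne; exists k.
Qed.

Lemma meetP (M : set nat) : (forall A, P A -> exists2 m, A m & M m) -> P M.
Proof.
move=> h; case: (sPU S M) => // hc; have [m hm1 hm2] := h _ hc; by [].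
Qed.

Lemma LoUp c m : q (c ** E m, true) = q (c ** E m, false) \/ q (c ** E m, true) = q (c, true).
Proof.
case: (sPU S [set k | E k ** E m = E m]) => h; [left|right]; apply/q_eq.
  by apply: sPS h => k hk; rewrite /valf /= -mul1A (EC (E m)) hk.
apply: sPS h => k hk; rewrite /valf /= -mul1A (EC (E m)).
by case: (Echain k m) => // ->.
Qed.

Definition UA (A : set nat) (y : Y) : set Y :=
  [set z | z = y \/ (~ isX y /\ exists2 m, A m & z = q (alpha y ** E m, false))].

Lemma UA_mono A B y : A `<=` B -> UA A y `<=` UA B y.
Proof. by move=> AB z [->|[hy [m /AB hm ->]]]; [left|right; split => //; exists m]. Qed.

Lemma UA_self A y : UA A y y.
Proof. by left. Qed.

Definition op (O : set Y) := forall y, O y -> ~ isX y -> exists2 A, P A & UA A y `<=` O.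

Lemma opT : op setT.
Proof. by move=> y _ _; exists setT => //; exact: sPT. Qed.

Lemma opI : setI_closed op.
Proof.
move=> O1 O2 h1 h2 y [y1 y2] hy.
have [A1 PA1 s1] := h1 y y1 hy; have [A2 PA2 s2] := h2 y y2 hy.
exists (A1 `&` A2); first exact: sPI.
by move=> z hz; split; [apply: s1 | apply: s2]; apply: UA_mono hz => k [].
Qed.

Lemma op_bigU (I : Type) (f : I -> set Y) : (forall i, op (f i)) -> op (\bigcup_i f i).
Proof.
move=> h y [i _ hi] hy; have [A PA sA] := h i y hi hy.
by exists A => // z /sA hz; exists i.
Qed.

Lemma op_UA A y : P A -> op (UA A y).
Proof.
move=> PA z [->|[hy [m _ ->]]] hz; first by exists A.
by exfalso; apply: hz; eexists.
Qed.

End A.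

HB.instance Definition _ (S : setup) := gen_eqMixin (Y S).
HB.instance Definition _ (S : setup) := gen_choiceMixin (Y S).
HB.instance Definition _ (S : setup) :=
  isOpenTopological.Build (Y S) (@opT S) (@opI S) (@op_bigU S).

Section B.
Variable S : setup.
Local Notation X := (sX S).
Local Notation P := (sP S).
Local Notation "a ** b" := (mul1 a b) (at level 40, left associativity).
Local Notation Y := (Y S).
Local Notation E := (@E S).

Lemma openE' (U0 : set Y) : open U0 = op U0.
Proof. by []. Qed.

Lemma nbhsE' (y : Y) (W : set Y) : nbhs y W <-> exists2 A, P A & UA A y `<=` W.
Proof.
split.
  move=> [U0 [oO Oy sOW]]; case: (pselect (isX y)) => hy.
    exists setT; first exact: sPT.
    by move=> z [->|[]]; [apply: sOW|].
  by have [A PA sA] := oO y Oy hy; exists A => // z /sA /sOW.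
move=> [A PA sA]; exists (UA A y); split => //; first exact: op_UA.
exact: UA_self.
Qed.


Lemma rep2 (y : Y) : exists a b, y = q (a, b) /\
  (forall A z, UA A y z -> z = y \/ (b = true /\ exists2 m, A m & z = q (a ** E m, false))).
Proof.
case: (pselect (isX y)) => hy.
  have [x hx] := hy; exists x, false; split => // A z [->|[]]; [by left|by []].
exists (alpha y), true; split; first exact: hat_rep.
move=> A z [->|[_ hz]]; [by left|by right].
Qed.

Lemma target (d : option X) A : P A -> exists2 B, P B & forall m, B m ->
  UA A (q (d, true)) (q (d ** E m, false)) /\ UA A (q (d, true)) (q (d ** E m, true)).
Proof.
move=> PA.
suff [B PB hB] : exists2 B, P B & forall m, B m -> UA A (q (d, true)) (q (d ** E m, false)).
  exists B => // m Bm; split; first exact: hB.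
  by case: (LoUp d m) => ->; [apply: hB | apply: UA_self].
case: (pselect (isX (q (d, true)))) => hw.
  have [z hz] := hw; have := hz; move/q_eq => K.
  exists [set k | valf (d, true) k = valf (z, false) k] => // m hm.
  left; rewrite hz; congr q; congr pair; exact: hm.
have hc := hat_rep hw; have := hc; move/q_eq => K.
exists (A `&` [set k | valf (d, true) k = valf (alpha (q (d, true)), true) k]).
  exact: sPI.
move=> m [Am hm]; right; split => //; exists m => //.
by congr q; congr pair; exact: hm.
Qed.

Lemma cont_core (y1 y2 : Y) A : P A -> exists2 B, P B &
  forall u v, UA B y1 u -> UA B y2 v -> UA A (mulY y1 y2) (mulY u v).
Proof.
move=> PA.
have [a1 [b1 [e1 H1]]] := rep2 y1; have [a2 [b2 [e2 H2]]] := rep2 y2.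
have hm : mulY y1 y2 = q (a1 ** a2, b1 || b2) by rewrite e1 e2 mulYq.
case hb : (b1 || b2).
  have [B PB hB] := target (a1 ** a2) PA.
  exists B => // u v /H1 hu /H2 hv; rewrite hm hb.
  case: hu => [->|[hb1 [m Bm ->]]]; case: hv => [->|[hb2 [m' Bm' ->]]].
  - by rewrite -hb -hm; apply: UA_self.
  - rewrite e1 mulYq /mulT /= mul1A orbF.
    by case: (b1); [apply: (hB _ Bm').2 | apply: (hB _ Bm').1].
  - rewrite e2 mulYq /mulT /= pushE.
    by case: (b2); [apply: (hB _ Bm).2 | apply: (hB _ Bm).1].
  - rewrite mulYq /mulT /= pushE mul1A -(mul1A _ (E m')).
    by case: (Echain S m' m) => ->; [apply: (hB _ Bm').1 | apply: (hB _ Bm).1].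
exists setT; first exact: sPT.
move=> u v /H1 hu /H2 hv.
case: hu => [->|[hb1 _]]; last by move: hb; rewrite hb1.
case: hv => [->|[hb2 _]]; last by move: hb; rewrite hb2 orbT.
exact: UA_self.
Qed.


Lemma UA_nbhs (y : Y) A : P A -> nbhs y (UA A y).
Proof. by move=> PA; apply/nbhsE'; exists A. Qed.

Lemma mulY_cont : continuous (fun p : Y * Y => mulY p.1 p.2).
Proof.
move=> [y1 y2] W /nbhsE' [A PA sA].
have [B PB hB] := cont_core y1 y2 PA.
exists (UA B y1, UA B y2).
  by split; apply/nbhsE'; exists B.
by move=> [u v] [/= hu hv]; apply: sA; apply: hB.
Qed.


Lemma Ecomm m n : E m ** E n = E n ** E m.
Proof. exact: EC. Qed.

Lemma absL (a : option X) m n : E m ** E n = E m -> a ** E n ** E m = a ** E m.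
Proof. by move=> h; rewrite -mul1A Ecomm h. Qed.

Lemma absR (a : option X) m n : E m ** E n = E m -> a ** E m ** E n = a ** E m.
Proof. by move=> h; rewrite -mul1A h. Qed.

Lemma HX (c x : option X) : (forall A, P A -> exists2 m, A m & c ** E m = x) ->
  q (c, true) = q (x, false).
Proof. by move=> h; apply/q_eq; apply: meetP => A /h [m Am hm]; exists m. Qed.

Lemma HH (c c' : option X) :
  (forall A, P A -> exists m m', [/\ A m, A m' & c ** E m = c' ** E m']) ->
  q (c, true) = q (c', true).
Proof.
move=> h; apply/q_eq; apply: meetP => A /h [m [m' [Am Am' hm]]].
case: (Echain S m m') => hc.
  exists m => //; rewrite /valf /= -(absL c' hc) -hm absR //.
  exact: EE.
exists m' => //; rewrite /valf /=.
have hc' : E m' ** E m = E m' by rewrite Ecomm.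
by rewrite -(absL c hc') hm absR //; exact: EE.
Qed.

Lemma UA_X (y : Y) A z : isX y -> UA A y z -> z = y.
Proof. by move=> hy [->|[]]. Qed.

Lemma hausY : hausdorff_space Y.
Proof.
move=> y1 y2 hc.
have hk : forall A, P A -> exists z, UA A y1 z /\ UA A y2 z.
  move=> A PA; have [z [h1 h2]] := hc _ _ (UA_nbhs y1 PA) (UA_nbhs y2 PA).
  by exists z.
case: (pselect (y1 = y2)) => // ne; exfalso.
case: (pselect (isX y1)) => [[x1 ex1]|hy1]; case: (pselect (isX y2)) => [[x2 ex2]|hy2].
- have [z [/UA_X h1 /UA_X h2]] := hk _ (@sPT S).
  by case: ne; rewrite -h1 ?h2 //; [exists x2 | exists x1].
- have : isX y2; last by [].
  exists x1; rewrite (hat_rep hy2); apply: HX => A PA.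
  have [z [h1 [e2|[_ [m Am ez]]]]] := hk _ PA.
    by case: ne; rewrite -e2 (UA_X _ h1) //; exists x1.
  by exists m => //; apply: qX_inj; rewrite -ex1 -ez (UA_X _ h1) //; exists x1.
- have : isX y1; last by [].
  exists x2; rewrite (hat_rep hy1); apply: HX => A PA.
  have [z [[e1|[_ [m Am ez]]] h2]] := hk _ PA.
    by case: ne; rewrite -e1 (UA_X _ h2) //; exists x2.
  by exists m => //; apply: qX_inj; rewrite -ex2 -ez (UA_X _ h2) //; exists x2.
- have := ne; apply; rewrite (hat_rep hy1) (hat_rep hy2); apply: HH => A PA.
  have [z [[e1|[_ [m Am ez]]] [e2|[_ [m' Am' ez']]]]] := hk _ PA.
  + by case: ne; rewrite -e1 -e2.
  + by case: hy1; rewrite -e1 ez'; eexists.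
  + by case: hy2; rewrite -e2 ez; eexists.
  + by exists m, m'; split => //; apply: qX_inj; rewrite -ez -ez'.
Qed.


Definition Up : set nat := [set m | P [set k | E k ** E m = E k]].

Lemma down (a c : option X) j k : a ** E j = c ** E j -> E k ** E j = E k ->
  a ** E k = c ** E k.
Proof. by move=> hj hk; rewrite -(absL a hk) hj absL. Qed.

Lemma key_eq (a c : option X) m m' : a ** E m = c ** E m' ->
  a ** E m' = c ** E m' \/ (a ** E m = c ** E m /\ c ** E m' = c ** E m).
Proof.
move=> h; case: (Echain S m m') => hc.
  right; have e1 : c ** E m = a ** E m.
    by rewrite -(absL c hc) -h absR //; exact: EE.
  by split; [rewrite e1 | rewrite -h e1].
left; have hc' : E m' ** E m = E m' by rewrite Ecomm.
by rewrite -(absL a hc') h absR //; exact: EE.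
Qed.

Lemma sep (y z : Y) A : P A -> ~ isX z -> ~ UA A y z -> (~ isX y -> P Up -> A `<=` Up) ->
  exists2 B, P B & forall w, UA B z w -> ~ UA A y w.
Proof.
move=> PA hz nyz hU.
case: (pselect (exists2 B, P B & forall w, UA B z w -> ~ UA A y w)) => // hn; exfalso.
have H0 : forall B, P B -> exists w, UA B z w /\ UA A y w.
  move=> B PB; case: (pselect (exists w, UA B z w /\ UA A y w)) => // hw.
  by case: hn; exists B => // w h1 h2; apply: hw; exists w.
have ez := hat_rep hz.
case: (pselect (isX y)) => [[x ex]|hy].
  apply: hz; exists x; rewrite ez; apply: HX => B PB.
  have [w [[e1|[_ [m Bm ew]]] h2]] := H0 _ PB.
    by case: nyz; rewrite -e1.
  have wy : w = y by apply: UA_X h2; exists x.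
  by exists m => //; apply: qX_inj; rewrite -ew wy ex.
have ey := hat_rep hy.
set a := alpha y; set c := alpha z.
have H : forall B, P B -> exists m m', [/\ A m, B m' & a ** E m = c ** E m'].
  move=> B PB; have [w [[e1|[_ [m' Bm' ew]]] [e2|[_ [m Am ew']]]]] := H0 _ PB.
  - by case: nyz; rewrite -e1 e2; exact: UA_self.
  - by case: hz; rewrite -e1 ew'; eexists.
  - by case: hy; rewrite -e2 ew; eexists.
  - by exists m, m'; split => //; apply: qX_inj; rewrite -ew' -ew.
set D := [set j | a ** E j = c ** E j].
have nD : ~ P D.
  move=> PD; apply: nyz; suff -> : z = y by exact: UA_self.
  by rewrite ez ey; apply/q_eq/eqv_sym.
have PnD : P (~` D) by case: (sPU S D).
case: (sPU S Up) => hUp.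
  have [m [m' [Am nDm' hmm]]] := H _ PnD.
  case: (key_eq hmm) => [//|[hDm _]].
  apply: nD; have := hU hy hUp _ Am; apply: sPS => k hk; exact: down hDm hk.
have [k0 [nUk0 nDk0]] := Pex (sPI hUp PnD).
have Pk0 : P [set k | E k ** E k0 = E k0].
  case: (sPU S [set k | E k ** E k0 = E k]) => h; first by case: nUk0.
  by apply: sPS h => k hk; case: (Echain S k k0).
apply: hz; exists (c ** E k0); rewrite ez; apply/q_eq; apply: meetP => B0 PB0.
have [m [m' [Am [[B0m' nDm'] Em'] hmm]]] := H _ (sPI (sPI PB0 PnD) Pk0).
case: (key_eq hmm) => [//|[hDm hcm]].
case: (Echain S k0 m) => hk.
  by case: nDk0; exact: down hDm hk.
exists m' => //; rewrite /valf /=.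
have h1 : E k0 ** E m' = E k0 by rewrite Ecomm.
have h2 : E m ** E k0 = E m by rewrite Ecomm.
by rewrite -(absL c h1) hcm absR.
Qed.

Lemma clopen_UA (y : Y) A : P A -> (~ isX y -> P Up -> A `<=` Up) -> clopen (UA A y).
Proof.
move=> PA hU; split; first by rewrite openE'; exact: op_UA PA.
rewrite -openC openE' => z hz hzX; exact: sep hzX hz hU.
Qed.

Lemma zdY : zero_dim_space Y.
Proof.
move=> y U oU Uy.
case: (pselect (isX y)) => hy.
  exists (UA setT y); split; [|exact: UA_self|].
    by apply: clopen_UA; [exact: sPT|].
  by move=> z /UA_X ->.
have [A PA sA] := oU y Uy hy.
case: (sPU S Up) => hUp.
  exists (UA (A `&` Up) y); split; [|exact: UA_self|].
    by apply: clopen_UA; [exact: sPI | move=> _ _ k []].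
  by move=> z /(UA_mono (fun k (h : (A `&` Up) k) => proj1 h)) /sA.
exists (UA A y); split; [|exact: UA_self|].
  apply: clopen_UA => // _ h; case: (@sP0 S).
  by apply: sPS (sPI h hUp) => k [].
exact: sA.
Qed.


Definition hY (x : X) : Y := q (Some x, false).

Lemma hY_emb : discrete_iso_embedding (@smul S) (@mulY S) hY.
Proof.
split.
- by move=> x x' /qX_inj [].
- by move=> x x'; rewrite /hY mulYq.
- move=> x; exists [set hY x]; split => //; last by move=> x' /qX_inj [].
  by rewrite openE' => y /= -> []; eexists.
Qed.

Lemma TzS_Y : TzS_semigroup (@mulY S).
Proof. split; [exact: mulY_assoc | exact: mulY_cont | exact: hausY | exact: zdY]. Qed.

Lemma gamma0_hat : ~ isX (q (None, true) : Y).
Proof.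
move=> [x /q_eq hx]; rewrite /eqv /valf /= in hx.
have [k0 hk0] := Pex hx.
apply: (@sPfree S k0); apply: sPS hx => k /= hk.
rewrite -hk in hk0; move: hk0; rewrite /E => -[] /(@se_inj S) ->.
by [].
Qed.

Lemma not_closed : ~ closed (range hY).
Proof.
move=> hc.
suff : range hY (q (None, true) : Y).
  by move=> [x _ hx]; apply: gamma0_hat; exists (Some x).
apply: hc => B /nbhsE' [A PA sA].
have [m Am] := Pex PA.
have [x hx] := mulE_Some (alpha (q (None, true) : Y)) m.
exists (hY x); split; first by exists x.
apply: sA; right; split; first exact: gamma0_hat.
by exists m => //; rewrite hx.
Qed.

End B.

Theorem lemma5p1 (X : Type) (mulX : X -> X -> X) :
  semigroup_op mulX -> TzS_closed mulX -> chain_finite mulX (sg_center mulX).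
Proof.
move=> hA hC C sub hch.
case: (pselect (finite_set C)) => // hinf.
have := hinf; move/infiniteP/card_leP => [f].
have [g _ ginj] := (injfunPex).1 (squash f).
pose e (n : nat) : X := val (g (exist _ n (mem_set I))).
have eC : forall n, C (e n) by move=> n; rewrite /e; apply: set_mem; exact: valP.
have einj : injective e.
  move=> n m /val_inj /ginj h.
  have := h (mem_set I) (mem_set I); by case.
have ecent : forall n x, mulX x (e n) = mulX (e n) x by move=> n x; exact: (sub _ (eC n) x).
have echain : forall n m, mulX (e n) (e m) = e n \/ mulX (e n) (e m) = e m.
  by move=> n m; apply: hch; apply: eC.
have [G [GU sG]] := ultraFilterLemma (@eventually_filter).
have GT : G setT by exact: filterT.
have GI : forall A B, G A -> G B -> G (A `&` B) by move=> *; exact: filterI.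
have GS : forall A B, A `<=` B -> G A -> G B by move=> A B AB; exact: filterS.
have G0 : ~ G set0 by exact: filter_not_empty.
have GUs : forall A, G A \/ G (~` A) by move=> A; exact: in_ultra_setVsetC.
have Gfree : forall n, ~ G [set n].
  move=> n hn; apply: G0.
  have hev : G [set k | (n < k)%N] by apply: sG; exists n.+1.
  by apply: GS (GI _ _ hn hev) => k [/= -> ]; rewrite ltnn.
pose St := Setup hA ecent echain einj GT GI GS G0 GUs Gfree.
case: (@not_closed St).
exact: (hC _ _ _ (@TzS_Y St) (@hY_emb St)).
Qed.
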